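(* In the setting of the context, assume $G_{xy}^{[1]}=1$, $G_x/G_x^{[1]}$ is insoluble and $G_x^{[1]}\neq1$. Then $G_x^{[1]}$ is isomorphic to $A_4$ or $S_4$, and $G_e$ acts faithfully by conjugation on $G_x^{[1]}G_y^{[1]}$.
   Context: $\mathcal{A}=(G_x,G_e,G_{xy})$ is a finite, primitive amalgam of degree $(5,2)$ (no nontrivial subgroup of $G_{xy}$ normal in both $G_x$ and $G_e$; $|G_x:G_{xy}|=5$, $|G_e:G_{xy}|=2$), $G=G_x*_{G_{xy}}G_e$ acts on the coset graph (5-valent tree) $\Gamma$, $x$ is the vertex with stabiliser $G_x$, $y$ the neighbour with $G_e$ the setwise stabiliser of $\{x,y\}$ and $G_x\cap G_y=G_{xy}$. $G_z^{[1]}$ is the pointwise stabiliser of $z$ and its neighbours, $G_{xy}^{[1]}=G_x^{[1]}\cap G_y^{[1]}$. *)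

(* Defs.v *)
From HB Require Import structures.
From mathcomp Require Import all_boot all_fingroup all_solvable.
Set Implicit Arguments. Unset Strict Implicit. Unset Printing Implicit Defensive.
Local Open Scope group_scope.

(* The amalgam (Gx, Ge, Gxy) is realised by subgroups of a finite group gT
   with Gx :&: Ge = Gxy. *)

Definition primitive_amalgam (gT : finGroupType) (Gx Ge Gxy : {set gT}) :=
  forall H : {group gT}, H \subset Gxy -> H <| Gx -> H <| Ge -> H :=: 1.

(* G_z^{[1]}: kernel of the action of the vertex stabiliser Gz on the
   neighbours of z, i.e. on the cosets of the arc stabiliser Gxy in Gz. *)
Definition kernel1 (gT : finGroupType) (Gz Gxy : {set gT}) := gcore Gxy Gz.

(* Main.v *)
Require Import Defs.
From HB Require Import structures.
From mathcomp Require Import all_boot all_fingroup all_solvable.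
Local Open Scope group_scope.

Module Aux.
Set Implicit Arguments. Unset Strict Implicit. Unset Printing Implicit Defensive.

Lemma prim_sup (aT : finGroupType) (sT : finType) (to : {action aT &-> sT})
  (G H : {group aT}) (S : {set sT}) :
  G \subset H -> [acts H, on S | to] -> [primitive G, on S | to] ->
  [primitive H, on S | to].
Proof.
move=> sGH aH /andP[trG nQ]; apply/andP; split.
  by rewrite (atrans_supgroup sGH trG).
apply: contra nQ => /existsP[Q /and3P[pQ aQ cQ]]; apply/existsP; exists Q.
by rewrite /imprimitivity_system pQ cQ (subset_trans sGH aQ).
Qed.

Lemma fix_all_perm (T : finType) (j0 : T) (p : {perm T}) :
  p \in 'C[j0 | 'P] -> p \in 'C(setT :\ j0 | 'P) -> p = 1.
Proof.
move=> /astab1P /= pj /astabP pD; apply/permP => u; rewrite perm1.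
have [-> //|uj] := eqVneq u j0.
by have := pD u; rewrite !inE uj /=; apply.
Qed.

Lemma O12 (aT : finGroupType) (sT : finType) (to : {action aT &-> sT})
  (Sg Al H : {group aT}) (D : {set sT}) :
  H \subset Sg -> Al \subset Sg -> #|Sg| = 24 -> #|Al| = 12 -> #|H| = 12 ->
  [primitive Al, on D | to] -> #|D| = 4 -> Al :&: 'C(D | to) \subset [1] ->
  H :=: Al.
Proof.
move=> sHS sAS oS oA oH primA oD fA.
have nHS : H <| Sg by apply: index2_normal => //; rewrite -divgS // oS oH.
have nHA : H :&: Al <| Al.
  by rewrite /normal subsetIr normsI ?normG // (subset_trans sAS) // normal_norm.
have ge6 : 6 <= #|H :&: Al|.
  have := mul_cardG H Al; rewrite oH oA.
  have : #|(H * Al)%g| <= 24.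
    by rewrite -oS subset_leq_card // mul_subG.
  move: #|(H * Al)%g| #|H :&: Al| => a b le24 e.
  have b0 : 0 < b by rewrite lt0n; apply/eqP => b0; rewrite b0 muln0 in e.
  rewrite leqNgt; apply/negP => lt6.
  have : a * b <= 24 * 5 by apply: leq_mul => //; rewrite -ltnS.
  by rewrite -e.
have [cA|trA] := prim_trans_norm primA nHA.
  have : H :&: Al \subset [1].
    apply: subset_trans fA; rewrite subsetI subsetIr /=.
    by apply: subset_trans cA _; apply: subsetIr.
  by move/subset_leq_card; rewrite cards1 => /(leq_trans ge6).
have d4 := atrans_dvd trA; rewrite oD in d4.
have dH : #|H :&: Al| %| 12 by rewrite -oH cardSg // subsetIl.
have e12 : #|H :&: Al| = 12.
  move: ge6 d4 dH; move: #|H :&: Al| => n.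
  by do 13 (case: n => [|n] //).
have eH : H :&: Al = H by apply/eqP; rewrite eqEcard subsetIl oH e12 /=.
apply/eqP; rewrite eqEcard oH oA leqnn andbT -eH subsetIr //.
Qed.

Section Lamb.
Variables (T : finType) (j0 : T) (n : nat).
Hypothesis cardT : #|T| = n.+2.
Let D := [set x : T | x != j0].
Let s := enum D.
Lemma size_s : size s = n.+1.
Proof. by rewrite -cardE /D cardsE cardC1 cardT. Qed.
Definition bb (i : 'I_n.+1) : T := nth j0 s i.
Definition cc (x : T) : 'I_n.+1 := inord (index x s).
Lemma bb_neq i : bb i != j0.
Proof.
have : bb i \in s by rewrite mem_nth // size_s.
by rewrite mem_enum inE.
Qed.
Lemma ccK i : cc (bb i) = i.
Proof.
apply: val_inj; rewrite /cc /bb index_uniq ?enum_uniq ?size_s //.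
by rewrite /= inordK.
Qed.
Lemma bbK x : x != j0 -> bb (cc x) = x.
Proof.
move=> xj; have xs : x \in s by rewrite mem_enum inE.
by rewrite /bb /cc inordK ?nth_index // -size_s index_mem.
Qed.
Definition lfun (q : {perm 'I_n.+1}) (x : T) : T :=
  if x == j0 then j0 else bb (q (cc x)).
Lemma lfun_inj q : injective (lfun q).
Proof.
move=> x y; rewrite /lfun.
have [-> | xj] := eqVneq x j0; have [-> | yj] := eqVneq y j0 => //.
- by move=> e; move: (bb_neq (q (cc y))); rewrite -e eqxx.
- by move=> e; move: (bb_neq (q (cc x))); rewrite e eqxx.
move=> /(congr1 cc); rewrite !ccK => /perm_inj /(congr1 bb).
by rewrite !bbK.
Qed.
Definition lam q : {perm T} := perm (@lfun_inj q).
Lemma lamE q x : lam q x = lfun q x. Proof. by rewrite permE. Qed.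
Lemma lam_morph : {in 'Sym_('I_n.+1) &, {morph lam : a b / a * b}}.
Proof.
move=> a b _ _; apply/permP => x; rewrite permM !lamE /lfun.
have [xj0 | xj] := eqVneq x j0; first by rewrite ?eqxx.
by rewrite (negPf (bb_neq _)) ccK permM.
Qed.
Canonical lam_morphism := Morphism lam_morph.
Lemma lam_inj : 'injm lam_morphism.
Proof.
apply/injmP => a b _ _ /= eab; apply/permP => i.
have := congr1 (fun p : {perm T} => p (bb i)) eab.
by rewrite /= !lamE /lfun (negPf (bb_neq _)) => /(congr1 cc); rewrite !ccK.
Qed.
Lemma lam_stab : lam_morphism @* 'Sym_('I_n.+1) \subset 'C[j0 | 'P].
Proof.
apply/subsetP => _ /morphimP[q _ _ ->]; apply/astab1P.
by rewrite /= /aperm lamE /lfun eqxx.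
Qed.
End Lamb.

Section Rep.
Variables (gT : finGroupType) (Gx Gxy : {group gT}).
Hypothesis sGxy : Gxy \subset Gx.
Hypothesis idx5 : #|Gx : Gxy| = 5.

Definition Om := rcosets Gxy Gx.
Definition OT := {X : {set gT} | X \in Om}.
Definition rto := subaction OT 'Rs.
Definition rho := actperm rto.

Lemma Gx_dom : Gx \subset subact_dom (fun X => X \in Om) 'Rs.
Proof.
have := actsRs_rcosets Gxy Gx; rewrite /subact_dom.
by congr (_ \subset 'N(_ | _)); apply/setP => X; rewrite inE.
Qed.

Lemma rhoE g X : g \in Gx -> val (rho g X) = val X :* g.
Proof.
move=> Gg; rewrite /rho actpermE /rto /= val_subact.
have h := subsetP Gx_dom g Gg.
by rewrite ifT //; exact: rcosetE.
Qed.

Lemma card_OT : #|{: OT}| = 5.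
Proof. by rewrite card_sig -idx5; apply: eq_card => X; rewrite !inE. Qed.

Lemma Gxy_Om : (Gxy : {set gT}) \in Om.
Proof. by apply/rcosetsP; exists 1; rewrite ?group1 ?rcoset1. Qed.

Definition j0 : OT := Sub (Gxy : {set gT}) Gxy_Om.

Lemma rho_stab g : g \in Gx -> (rho g \in 'C[j0 | 'P]) = (g \in Gxy).
Proof.
move=> Gg; apply/astab1P/idP => [e | Hg].
  have := congr1 val e; rewrite /= /aperm rhoE //= => e'.
  by rewrite -e' rcoset_refl.
by apply: val_inj; rewrite /= /aperm rhoE //= rcoset_id.
Qed.

Lemma ker_rho : 'ker_Gx rho = gcore Gxy Gx.
Proof.
apply/setP => g; apply/idP/idP.
  case/setIP => Gg /mker e; rewrite -astabRs_rcosets; apply/astabP => X OX.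
  have := congr1 (fun p : {perm OT} => val (p (Sub X OX : OT))) e.
  rewrite /= rhoE // perm1 /= => e'; transitivity (X :* g); last by [].
  exact: rcosetE.
move=> Cg; have Gg : g \in Gx.
  by apply: (subsetP sGxy); apply: (subsetP (gcore_sub Gxy Gx)).
rewrite inE Gg /=; apply/kerP; first by apply: (subsetP Gx_dom).
apply/permP => X; apply: val_inj; rewrite rhoE // perm1.
move: Cg; rewrite -astabRs_rcosets => /astabP /(_ _ (valP X)) e.
by rewrite -[in RHS]e; apply: esym; exact: rcosetE.
Qed.

Lemma rho_trans : [transitive rho @* Gx, on setT | 'P].
Proof.
apply/imsetP; exists j0 => //; apply/setP => X; rewrite inE; apply/esym.
case/rcosetsP: (valP X) => g Gg eX.
apply/imsetP; exists (rho g); first by apply: mem_morphim => //; apply: (subsetP Gx_dom).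
by apply: val_inj; rewrite /= /aperm rhoE.
Qed.
End Rep.

Lemma perm_fix_all (T : finType) (p : {perm T}) : p \in 'C(setT | 'P) -> p = 1.
Proof.
move=> /astabP pD; apply/permP => u; rewrite perm1; exact: pD.
Qed.

Lemma prim5 (T : finType) (P : {group {perm T}}) :
  #|T| = 5 -> [transitive P, on setT | 'P] -> [primitive P, on setT | 'P].
Proof.
move=> cT trP; have [x _ _] := imsetP trP.
rewrite (trans_prim_astab (in_setT x) trP); apply/maximal_eqP; split.
  exact: subsetIl.
move=> H sCH sHP.
have i5 : #|P : 'C_P[x | 'P]| = 5.
  have := card_orbit_stab 'P P x; rewrite (atransP trP x (in_setT x)) cardsT cT.
  rewrite -(Lagrange (subsetIl P 'C[x | 'P])) mulnC => /eqP.
  by rewrite eqn_pmul2l ?cardG_gt0 // => /eqP.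
have := Lagrange_index sHP sCH; rewrite i5 => e.
have : (#|P : H| == 1%N) || (#|H : 'C_P[x | 'P]%G| == 1%N).
  move: e; set a := #|P : H|; set b := #|H : _|; clearbody a b => e.
  have : a %| 5 by rewrite -e dvdn_mulr.
  case/primeP: (isT : prime 5) => _ /[apply] /orP[-> //|/eqP a5].
  by move: e; rewrite a5 -{2}(muln1 5) => /eqP; rewrite eqn_pmul2l // orbC => ->.
case/orP; rewrite indexg_eq1 => sub.
  by right; apply/eqP; rewrite eqEsubset sHP.
by left; apply/eqP; rewrite eqEsubset sub.
Qed.

Lemma k_cases k : 5 %| k -> k %| 60 -> k != 30 -> k != 60 -> k \in [:: 5; 10; 15; 20].
Proof.
move=> d5 d60; have := dvdn_leq (isT : 0 < 60) d60; move: k d5 d60.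
by do 62 (case=> //).
Qed.

Lemma m_cases k m : k \in [:: 5; 10; 15; 20] -> m %| k -> m %% 5 = 1%N -> m = 1%N.
Proof.
rewrite !inE; case/or4P => /eqP -> dm; have := dvdn_leq (ltn0Sn _) dm;
  move: m dm; by do 22 (case=> //).
Qed.

Lemma sol_small (gT : finGroupType) (K : {group gT}) :
  5 %| #|K| -> #|K| %| 60 -> #|K| != 30 -> #|K| != 60 -> solvable K.
Proof.
move=> d5 d60 n30 n60; have hk := k_cases d5 d60 n30 n60.
have n5 : #|'Syl_5(K)| = 1%N.
  exact: m_cases hk (card_Syl_dvd 5 K) (card_Syl_mod K (isT : prime 5)).
have /normal_sylowP [S sylS nSK] : #|'Syl_5(K)| == 1%N by rewrite n5.
have oS : #|S| = 5.
  case/pHallP: sylS => _ ->; rewrite p_part.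
  by move: hk; rewrite !inE; case/or4P => /eqP ->.
rewrite (series_sol nSK) (pgroup_sol (pHall_pgroup sylS)) /=.
have oQ : #|K / S| = (#|K| %/ 5)%N.
  by rewrite card_quotient ?normal_norm // -divgS ?normal_sub // oS.
move: hk; rewrite !inE; case/or4P => /eqP ek.
- by apply: (@pgroup_sol _ 2); rewrite /pgroup oQ ek.
- by apply: (@pgroup_sol _ 2); rewrite /pgroup oQ ek.
- by apply: (@pgroup_sol _ 3); rewrite /pgroup oQ ek.
- by apply: (@pgroup_sol _ 2); rewrite /pgroup oQ ek.
Qed.

Lemma abelian_bool : abelian [set: bool].
Proof. by apply/centsP => a _ b _; apply: addbC. Qed.

Lemma alt_sub (T : finType) (P : {group {perm T}}) :
  #|T| = 5 -> [transitive P, on setT | 'P] -> ~~ solvable P ->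
  'Alt_T \subset P.
Proof.
move=> cT trP nsP.
set K := (P :&: 'Alt_T)%G.
have nKP : K <| P by apply: normalGI (Alt_normal T); apply: subsetT.
have solQ : solvable (P / K).
  apply: abelian_sol.
  have sPd : P \subset 'dom (sign_morph T) by apply: subsetT.
  have := first_isog_loc (sign_morph T) sPd.
  have -> : 'ker_P (sign_morph T) = K by [].
  move/isog_abelian ->; apply: abelianS abelian_bool; apply: subsetT.
have nsK : ~~ solvable K by apply: contra nsP; rewrite (series_sol nKP) solQ andbT.
have oA : #|'Alt_T| = 60.
  have : (1 < #|T|)%N by rewrite cT.
  move/card_Alt; rewrite cT (_ : 5`! = 2 * 60)%N // => /eqP; rewrite eqn_pmul2l //.
  by move/eqP.
have primP := prim5 cT trP.
have [cK | trK] := prim_trans_norm primP nKP.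
  suff : K :=: 1 by move=> K1; rewrite K1 solvable1 in nsK.
  apply/eqP; rewrite eqEsubset sub1G andbT; apply/subsetP => p Kp.
  rewrite inE; apply/eqP; apply: perm_fix_all.
  by have := subsetP cK p Kp; case/setIP.
have d5 := atrans_dvd trK; rewrite cardsT cT in d5.
have sKA : K \subset 'Alt_T by apply: subsetIr.
have d60 : #|K| %| 60 by rewrite -oA cardSg.
have [e60 | n60] := eqVneq #|K| 60.
  have eK : K :=: 'Alt_T by apply/eqP; rewrite eqEcard sKA oA e60 /=.
  by rewrite -eK subsetIl.
have [e30 | n30] := eqVneq #|K| 30; last by rewrite sol_small in nsK.
have nKA : K <| 'Alt_T by apply: index2_normal => //; rewrite -divgS // oA e30.
have : 4 < #|T| by rewrite cT.
move/simple_Alt5/simpleP => [_ /(_ K nKA)] [K1 | KA].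
  by move: e30; rewrite K1 cards1.
by move: e30; rewrite KA oA.
Qed.

Local Open Scope nat_scope.
Lemma ar48 a : 4 %| a -> a %| 24 -> ~~ (3 %| a) -> (a == 4) || (a == 8).
Proof.
move=> d4 d24; have := dvdn_leq (isT : 0 < 24) d24; move: a d4 d24.
by do 26 (case=> //).
Qed.

Lemma ar_fix a c : (a == 4) || (a == 8) -> c %| a -> a = c %[mod 5] -> c = a.
Proof.
case/orP => /eqP -> dc; have := dvdn_leq (ltn0Sn _) dc; move: c dc;
  by do 10 (case=> //).
Qed.

Lemma ar_n5 a : (a == 4) || (a == 8) -> ~~ (5 %| a).
Proof. by case/orP => /eqP ->. Qed.

Lemma ar_3 a n : (a == 4) || (a == 8) -> n %| a -> 3.-nat n -> n = 1.
Proof.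
case/orP => /eqP -> dn; have := dvdn_leq (ltn0Sn _) dn; move: n dn;
  by do 10 (case=> //).
Qed.

Lemma ar1224 a : 4 %| a -> a %| 24 -> 3 %| a -> (a == 12) || (a == 24).
Proof.
move=> d4 d24; have := dvdn_leq (isT : 0 < 24) d24; move: a d4 d24.
by do 26 (case=> //).
Qed.
Local Open Scope group_scope.

Section Main.
Variables (gT : finGroupType) (Gx Ge Gxy : {group gT}) (t : gT).
Hypotheses (sx : Gxy \subset Gx) (se : Gxy \subset Ge).
Hypotheses (i5 : #|Gx : Gxy| = 5) (i2 : #|Ge : Gxy| = 2).
Hypothesis tE : t \in Ge :\: Gxy.
Let A := gcore_group Gxy Gx.
Let B := gcore_group Gxy (Gx :^ t)%G.
Hypotheses (AB1 : A :&: B = 1) (nsol : ~~ solvable (Gx / A)) (An1 : A != 1 :> {set gT}).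

Lemma nGxyGe : Gxy <| Ge. Proof. exact: index2_normal. Qed.
Lemma tGe : t \in Ge. Proof. by case/setDP: tE. Qed.
Lemma tnGxy : t \notin Gxy. Proof. by case/setDP: tE. Qed.
Lemma GxyJ : Gxy :^ t = Gxy.
Proof. by apply/normP; apply: (subsetP (normal_norm nGxyGe)); apply: tGe. Qed.
Lemma GxyJV : Gxy :^ t^-1 = Gxy.
Proof. by rewrite -{1}GxyJ -conjsgM mulgV conjsg1. Qed.
Lemma coset_t : Gxy :* t = Ge :\: Gxy.
Proof. exact: rcoset_index2. Qed.
Lemma tt_Gxy : t * t \in Gxy.
Proof.
apply: contraR tnGxy => ntt.
have : t * t \in Gxy :* t by rewrite coset_t inE ntt groupM ?tGe.
by rewrite mem_rcoset mulgK.
Qed.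
Lemma sAGxy : A \subset Gxy. Proof. exact: gcore_sub. Qed.
Lemma sBGxy : B \subset Gxy. Proof. exact: gcore_sub. Qed.
Lemma nAGx : Gx \subset 'N(A). Proof. exact: gcore_norm. Qed.
Lemma sAGx : A \subset Gx. Proof. exact: subset_trans sAGxy sx. Qed.
Lemma sBGx : B \subset Gx. Proof. exact: subset_trans sBGxy sx. Qed.
Lemma BE : B :=: A :^ t.
Proof.
apply/eqP; rewrite eqEsubset; apply/andP; split.
  rewrite -sub_conjgV; apply: gcore_max.
    by rewrite -GxyJV conjSg gcore_sub.
  rewrite normJ -sub_conjg; exact: gcore_norm.
apply: gcore_max; first by rewrite -GxyJ conjSg sAGxy.
by rewrite normJ conjSg nAGx.
Qed.
Lemma BJ : B :^ t = A.
Proof.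
rewrite BE -conjsgM; apply/normP.
by apply: (subsetP nAGx); apply: (subsetP sx); apply: tt_Gxy.
Qed.
Lemma nAGxy : Gxy \subset 'N(A). Proof. exact: subset_trans sx nAGx. Qed.
Lemma nBGxy : Gxy \subset 'N(B).
Proof. by rewrite BE normJ -GxyJ conjSg nAGxy. Qed.
Lemma cardAB : #|B| = #|A|. Proof. by rewrite BE cardJg. Qed.

Let T : finType := OT Gx Gxy.
Let r := rho Gx Gxy.
Let P := (r @* Gx)%G.
Let j := j0 Gx Gxy.
Let D := [set: T] :\ j.

Lemma cT : #|T| = 5. Proof. exact: card_OT. Qed.
Lemma domGx : Gx \subset 'dom r. Proof. exact: Gx_dom. Qed.
Lemma rGx g : g \in Gx -> r g \in P.
Proof. by move=> Gg; apply: mem_morphim => //; apply: (subsetP domGx). Qed.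
Lemma kerA g : g \in Gx -> r g = 1 -> g \in A.
Proof.
move=> Gg e; rewrite /A /= -(ker_rho sx) inE Gg /=; apply/kerP => //.
exact: (subsetP domGx).
Qed.
Lemma rA g : g \in A -> r g = 1.
Proof.
move=> Ag; have : g \in 'ker_Gx r by rewrite (ker_rho sx); exact: Ag.
by case/setIP => _ /mker.
Qed.
Lemma Pnsol : ~~ solvable P.
Proof.
have := first_isog_loc r domGx; rewrite (ker_rho sx) => /isog_sol <-.
by have := nsol; rewrite /A.
Qed.
Lemma AltP : 'Alt_T \subset P.
Proof. exact: alt_sub cT (rho_trans Gx Gxy) Pnsol. Qed.
Lemma rGxy : r @* Gxy = 'C_P[j | 'P].
Proof.
apply/setP => p; apply/idP/idP.
  case/morphimP => g _ Gg ->; have Gxg := subsetP sx g Gg.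
  by rewrite inE rGx // rho_stab.
case/setIP => /morphimP [g _ Gg ->] Cg.
by apply: mem_morphim; [apply: (subsetP domGx) | rewrite -(rho_stab Gxy Gg)].
Qed.

Let CA := ('C_('Alt_T)[j | 'P])%G.
Let CS := ('C_('Sym_T)[j | 'P])%G.
Let rB := (r @* B)%G.
Let RG := ('C_P[j | 'P])%G.

Lemma cD : #|D| = 4.
Proof. by have := cardsD1 j [set: T]; rewrite cardsT cT inE => -[]. Qed.
Lemma Alt3 : [transitive^3 'Alt_T, on [set: T] | 'P].
Proof. by have := Alt_trans T; rewrite cT. Qed.
Lemma oAlt : #|'Alt_T| = 60.
Proof.
have : (1 < #|T|)%N by rewrite cT.
move/card_Alt; rewrite cT (_ : 5`! = 2 * 60)%N // => /eqP; rewrite eqn_pmul2l //.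
by move/eqP.
Qed.
Lemma oCA : #|CA| = 12.
Proof.
have := card_orbit_stab 'P 'Alt_T j.
rewrite (atransP (ntransitive1 (isT : 0 < 3) Alt3) j (in_setT j)) cardsT cT oAlt.
by rewrite (_ : 60 = 5 * 12)%N // => /eqP; rewrite eqn_pmul2l // => /eqP.
Qed.
Lemma oCS : #|CS| = 24.
Proof.
have := card_orbit_stab 'P 'Sym_T j.
have trS : [transitive 'Sym_T, on [set: T] | 'P].
  by apply: (ntransitive1 _ (Sym_trans T)); rewrite cT.
rewrite (atransP trS j (in_setT j)) cardsT cT card_Sym cT.
by rewrite (_ : 5`! = 5 * 24)%N // => /eqP; rewrite eqn_pmul2l // => /eqP.
Qed.
Lemma tr2CA : [transitive^2 CA, on D | 'P].
Proof. exact: stab_ntransitive (in_setT j) Alt3. Qed.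
Lemma primCA : [primitive CA, on D | 'P].
Proof. exact: ntransitive_primitive tr2CA. Qed.
Lemma faithCA : 'C_CA(D | 'P) \subset [1].
Proof.
apply/subsetP => p /setIP [/setIP [_ pj] pD]; rewrite inE; apply/eqP.
exact: fix_all_perm pj pD.
Qed.
Lemma CA_RG : CA \subset RG.
Proof. by apply: setSI; apply: AltP. Qed.
Lemma CA_CS : CA \subset CS.
Proof. by apply: setSI; apply: subsetT. Qed.
Lemma RG_CS : RG \subset CS.
Proof. by apply: setSI; apply: subsetT. Qed.
Lemma stabD p : p \in 'C[j | 'P] -> p \in 'N(D | 'P).
Proof.
move/astab1P => /= pj; apply/astabsP => u; rewrite /= /aperm !inE /=.
by rewrite -{1}pj (inj_eq perm_inj).
Qed.
Lemma actsRG : [acts RG, on D | 'P].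
Proof. by apply/subsetP => p /setIP [_ pj]; apply: stabD. Qed.
Lemma primRG : [primitive RG, on D | 'P].
Proof. exact: prim_sup CA_RG actsRG primCA. Qed.

Lemma nBGxy' : B <| Gxy. Proof. by rewrite /normal sBGxy nBGxy. Qed.
Lemma nrB : rB <| RG.
Proof. by rewrite /rB /RG /= -rGxy; apply: morphim_normal nBGxy'. Qed.
Lemma rB_inj g : g \in B -> r g = 1 -> g = 1.
Proof.
move=> Bg e; have Ag : g \in A by apply: kerA (subsetP sBGx g Bg) e.
have : g \in A :&: B by rewrite inE Ag Bg.
by rewrite AB1 inE => /eqP.
Qed.
Lemma card_rB : #|rB| = #|B|.
Proof.
rewrite /rB card_morphim (setIidPr (subset_trans sBGx domGx)) -indexgI.
suff -> : B :&: 'ker r = 1 by rewrite indexg1.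
apply/eqP; rewrite eqEsubset sub1G andbT; apply/subsetP => g /setIP [Bg /mker e].
by rewrite inE (rB_inj Bg e).
Qed.
Lemma rB_RG : rB \subset RG. Proof. exact: normal_sub nrB. Qed.
Lemma rB_CS : rB \subset CS. Proof. exact: subset_trans rB_RG RG_CS. Qed.
Lemma Bn1 : B != 1 :> {set gT}.
Proof.
by apply: contra An1; rewrite !trivg_card1 cardAB.
Qed.
Lemma trB : [transitive rB, on D | 'P].
Proof.
have [cB|//] := prim_trans_norm primRG nrB.
exfalso; move/negP: Bn1; apply; apply/eqP; apply/eqP; rewrite eqEsubset sub1G andbT.
apply/subsetP => g Bg; rewrite inE; apply/eqP; apply: rB_inj => //.
have : r g \in 'C_RG(D | 'P).
  by apply: (subsetP cB); apply: mem_morphim => //; apply: (subsetP domGx); apply: (subsetP sBGx).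
case/setIP => /setIP [_ pj] pD; exact: fix_all_perm pj pD.
Qed.
Lemma d4B : (4 %| #|B|)%N.
Proof. by rewrite -card_rB -cD; apply: atrans_dvd trB. Qed.
Lemma d24B : (#|B| %| 24)%N.
Proof. by rewrite -card_rB -oCS; apply: cardSg rB_CS. Qed.

Lemma rM g h : g \in Gx -> h \in Gx -> r (g * h) = r g * r h.
Proof. by move=> Gg Gh; rewrite /r /rho morphM //; apply: (subsetP domGx). Qed.

Lemma lemY k : CA \subset rB -> k \in Gxy -> k \in 'C(B) -> k \in A.
Proof.
move=> sCA Gk Ck; have Gxk := subsetP sx k Gk.
apply: kerA => //; set p := r k.
have pj : p \in 'C[j | 'P] by rewrite rho_stab.
apply: (fix_all_perm pj); apply/astabP => u uD /=; rewrite /aperm.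
apply/eqP; apply/negP => /negP nvu; set v := p u in nvu.
have vD : v \in D by have := astabsP (stabD pj) u; rewrite uD; apply.
have : (0 < #|D :\ u :\ v|)%N.
  have e1 : #|D :\ u| = 3.
    by have := cardsD1 u D; rewrite uD cD add1n => -[].
  have e2 : #|D :\ u :\ v| = 2.
    by have := cardsD1 v (D :\ u); rewrite in_setD1 nvu vD e1 add1n => -[].
  by rewrite e2.
case/card_gt0P => w; rewrite 2!in_setD1 => /and3P [nwv nwu wD].
have tu : [tuple u; v] \in 2.-dtuple(D).
  by rewrite inE /= andbT !memtE !subset_all /= uD vD andbT inE eq_sym nvu.
have tw : [tuple u; w] \in 2.-dtuple(D).
  by rewrite inE /= andbT !memtE !subset_all /= uD wD andbT inE eq_sym nwu.
have [tau CAt etau] := atransP2 tr2CA tu tw.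
have [tu' tw'] : tau u = u /\ tau v = w.
  move: (congr1 val etau); rewrite /= /n_act /= => -[e1 e2].
  by split; apply/esym; [exact: e1 | exact: e2].
have := subsetP sCA tau CAt; case/morphimP => b _ Bb eb.
have Gb := subsetP sBGx b Bb.
have ebr : tau = r b by [].
have cbk : tau * p = p * tau.
  by rewrite ebr /p -!rM //; congr (r _); apply/esym; apply: (centP Ck).
have := congr1 (fun q : {perm T} => q u) cbk; rewrite !permM tu' tw'.
by move=> e; move: nwv; rewrite -e eqxx.
Qed.

Lemma three_B : (3 %| #|B|)%N.
Proof.
apply/negPn/negP => n3.
have hA : (#|A| == 4%N) || (#|A| == 8%N) by rewrite -cardAB; apply: ar48 d4B d24B n3.
have d5 : (5 %| #|Gx|)%N by rewrite -(Lagrange sx) i5 dvdn_mull.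
have [g Gg og] := Cauchy (isT : prime 5) d5.
have cg : g \in 'C(A).
  have p5 : 5.-group <[g]> by rewrite /pgroup -orderE og pnat_id.
  have acts : [acts <[g]>, on A | 'J].
    by rewrite /= astabsJ cycle_subG (subsetP nAGx).
  have := pgroup_fix_mod p5 acts; rewrite /= afixJ => e.
  have eC : #|A :&: 'C(<[g]>)| = #|A|.
    apply: ar_fix hA _ e; exact: cardSg (subsetIl _ _).
  have : A \subset 'C(<[g]>).
    have : A :&: 'C(<[g]>) == A by rewrite eqEcard subsetIl eC leqnn.
    by move/eqP <-; apply: subsetIr.
  by rewrite centsC cycle_subG.
set CC := ('C_Gx(A))%G.
have nCC : CC <| Gx by apply: normalGI nAGx (cent_normal A).
have nrCC : r @* CC <| P by apply: morphim_normal.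
set M := ('Alt_T :&: r @* CC)%G.
have nM : M <| 'Alt_T by apply: normalGI AltP nrCC.
have Dg : g \in 'dom r by apply: (subsetP domGx).
have rgM : r g \in M.
  rewrite inE; apply/andP; split; last first.
    by apply: mem_morphim => //; rewrite inE Gg cg.
  have e5 : r g ^+ 5 = 1 by rewrite /r /rho -morphX // -og expg_order morph1.
  have e33 : r g ^+ 3 * r g ^+ 3 = r g by rewrite -expgD (expgS _ 5) e5 mulg1.
  by rewrite -e33 Alt_even odd_permM addbb.
have rg1 : r g != 1.
  apply/eqP => /(kerA Gg) Ag; have := order_dvdG Ag; rewrite og.
  by move/negP: (ar_n5 hA).
have MA : M :=: 'Alt_T.
  have : (4 < #|T|)%N by rewrite cT.
  move/simple_Alt5/simpleP => [_ /(_ M nM)] [M1 | //].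
  by move: rgM rg1; rewrite M1 inE => ->.
have sCA : CA \subset r @* CC.
  have sAr : 'Alt_T \subset r @* CC by rewrite -MA subsetIr.
  exact: subset_trans (subsetIl _ _) sAr.
have d3 : (3 %| #|CA|)%N by rewrite oCA.
have [pi CApi opi] := Cauchy (isT : prime 3) d3.
have /morphimP [c Dc CCc epi0] := subsetP sCA pi CApi.
have epi : pi = r c by [].
have Gc : c \in Gx by case/setIP: CCc.
have Cc : c \in 'C(A) by case/setIP: CCc.
have Gxyc : c \in Gxy.
  rewrite -(rho_stab Gxy Gc); have : pi \in 'C[j | 'P] by case/setIP: CApi.
  by rewrite epi.
set d := c.`_3.
have dc : d \in <[c]> by apply: cycle_constt.
have Gxyd : d \in Gxy by move: dc; apply/subsetP; rewrite cycle_subG.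
have Cd : d \in 'C(A) by move: dc; apply/subsetP; rewrite cycle_subG.
have Gd : d \in Gx by apply: (subsetP sx).
have rd : r d = pi.
  have -> : r d = (r c).`_3 by rewrite /r /rho morph_constt.
  have <- : r c = pi by rewrite epi.
  by apply: constt_p_elt; rewrite /p_elt /= -epi opi pnat_id.
set e := d ^ t.
have tN : t \in 'N(Gxy) by apply: (subsetP (normal_norm nGxyGe)); apply: tGe.
have Gxye : e \in Gxy by rewrite /e memJ_norm.
have Ge' : e \in Gx by apply: (subsetP sx).
have Ce : e \in 'C(B) by rewrite BE centJ memJ_conjg.
have e3 : 3.-elt e by rewrite /e p_eltJ /d p_elt_constt.
have re3 : 3.-elt (r e) by rewrite /r /rho morph_p_elt //; apply: (subsetP domGx).
have rej : r e \in 'C[j | 'P] by rewrite rho_stab.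
have p3 : 3.-group <[r e]> by rewrite /pgroup -orderE.
have actsD : [acts <[r e]>, on D | 'P] by rewrite cycle_subG; apply: stabD.
have := pgroup_fix_mod p3 actsD; rewrite cD => fm.
have : (0 < #|'Fix_(D | 'P)(<[r e]>)|)%N.
  by rewrite lt0n; apply/negP => /eqP f0; move: fm; rewrite f0.
case/card_gt0P => u /setIP [uD]; rewrite afix_cycle => /afix1P /= ueu.
have refix : r e \in 'C(D | 'P).
  apply/astabP => v vD /=; rewrite /aperm.
  have [tau rBt vt] := atransP2 trB uD vD.
  have /morphimP [b _ Bb eb] := rBt.
  have Gb := subsetP sBGx b Bb.
  have ebr : tau = r b by [].
  have cbe : tau * r e = r e * tau.
    by rewrite ebr -!rM //; congr (r _); apply/esym; apply: (centP Ce).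
  have := congr1 (fun q : {perm T} => q u) cbe; rewrite !permM.
  have vt' : v = tau u by [].
  have ueu' : r e u = u by [].
  by rewrite -vt' ueu' vt'.
have e1 : e = 1.
  have Ae := kerA Ge' (fix_all_perm rej refix).
  apply/eqP; rewrite -order_eq1; apply/eqP.
  exact: ar_3 hA (order_dvdG Ae) e3.
have d1 : d = 1 by apply/eqP; rewrite -(conjg_eq1 d t) -/e e1.
by move: opi; rewrite -rd d1 /r /rho morph1 order1.
Qed.

Lemma rB_cases : (rB :=: CS) \/ (rB :=: CA).
Proof.
have := ar1224 d4B d24B three_B; rewrite -card_rB => /orP [] /eqP o.
  by right; apply: O12 rB_CS CA_CS oCS oCA o primCA cD faithCA.
by left; apply/eqP; rewrite eqEcard rB_CS oCS o /=.
Qed.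
Lemma CA_rB : CA \subset rB.
Proof. by case: rB_cases => ->; [apply: CA_CS | apply: subxx]. Qed.

Lemma isoB : B \isog 'Alt_('I_4) \/ B \isog 'Sym_('I_4).
Proof.
have sBd : B \subset 'dom r by apply: subset_trans sBGx domGx.
have injB : 'injm (restrm sBd r).
  rewrite ker_restrm; apply/subsetP => g /setIP [Bg /mker e].
  by rewrite inE (rB_inj Bg e).
have iB : B \isog rB.
  by have := sub_isog (subxx B) injB; rewrite morphim_restrm setIid.
have cT' : #|T| = 3.+2 by rewrite cT.
set lm := lam_morphism j cT'.
have inj := lam_inj j cT'.
have lmS : lm @* 'Sym_('I_4) \subset CS.
  by rewrite subsetI subsetT; apply: lam_stab.
have oS4 : #|'Sym_('I_4)| = 24 by rewrite card_Sym card_ord.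
have oA4 : #|'Alt_('I_4)| = 12.
  have : (1 < #|'I_4|)%N by rewrite card_ord.
  move/card_Alt; rewrite card_ord (_ : 4`! = 2 * 12)%N // => /eqP.
  by rewrite eqn_pmul2l // => /eqP.
have eS : lm @* 'Sym_('I_4) = CS.
  apply/eqP; rewrite eqEcard lmS oCS card_injm //.
  by rewrite oS4.
have eA : lm @* 'Alt_('I_4) = CA.
  apply: O12 _ CA_CS oCS oCA _ primCA cD faithCA.
    by apply: subset_trans lmS; apply: morphimS; apply: subsetT.
  by rewrite card_injm // subsetT.
have iS : 'Sym_('I_4) \isog CS by rewrite -eS; apply: sub_isog.
have iA : 'Alt_('I_4) \isog CA by rewrite -eA; apply: sub_isog => //; apply: subsetT.
case: rB_cases => e; rewrite e in iB.
  by right; apply: isog_trans iB (isog_symr iS).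
by left; apply: isog_trans iB (isog_symr iA).
Qed.

Lemma isoA : A \isog 'Alt_('I_4) \/ A \isog 'Sym_('I_4).
Proof.
have iAB : A \isog B by rewrite BE; apply: conj_isog.
by case: isoB => i; [left | right]; apply: isog_trans iAB i.
Qed.

Lemma kGe k : k \in Ge -> k \notin Gxy -> A :^ k = B /\ B :^ k = A.
Proof.
move=> Gk nk; have : k \in Gxy :* t by rewrite coset_t inE nk Gk.
case/rcosetP => h Gh ->; rewrite !conjsgM.
have -> : A :^ h = A by apply/normP; apply: (subsetP nAGxy).
have -> : B :^ h = B by apply/normP; apply: (subsetP nBGxy).
by rewrite -BE BJ.
Qed.

Lemma actsAB : [acts Ge, on A * B | 'J].
Proof.
rewrite /= astabsJ; apply/subsetP => k Gk; rewrite inE conjsMg.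
have [Gxyk | nk] := boolP (k \in Gxy).
  have -> : A :^ k = A by apply/normP; apply: (subsetP nAGxy).
  by have -> : B :^ k = B by apply/normP; apply: (subsetP nBGxy).
have [-> ->] := kGe Gk nk.
have nAB : A \subset 'N(B) by apply: subset_trans sAGxy nBGxy.
by rewrite (normC nAB).
Qed.

Lemma faithAB : [faithful Ge, on A * B | 'J].
Proof.
rewrite /faithful astabJ; apply/subsetP => k /setIP [Gk Ck].
have CkA : k \in 'C(A) by apply: (subsetP (centS (mulg_subl A (group1 B)))).
have CkB : k \in 'C(B) by apply: (subsetP (centS (mulg_subr B (group1 A)))).
have Gxyk : k \in Gxy.
  apply: contraR An1 => nk; have [eA _] := kGe Gk nk.
  have : A :^ k = A by apply/normP; apply: (subsetP (cent_sub A)).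
  rewrite eA => eBA; apply/eqP; rewrite -{1}AB1 -eBA setIid.
  by rewrite eBA.
have Ak := lemY CA_rB Gxyk CkB.
set z := k ^ t.
have Bz : z \in B by rewrite BE memJ_conjg.
have Cz : z \in 'C(B) by rewrite BE centJ memJ_conjg.
have Az := lemY CA_rB (subsetP sBGxy z Bz) Cz.
have : z \in A :&: B by rewrite inE Az Bz.
rewrite AB1 inE /z conjg_eq1 => /eqP ->; exact: group1.
Qed.
End Main.
End Aux.
Unset Implicit Arguments.

(* t is any element of Ge \ Gxy, so y = x^t and G_y = Gx :^ t;
   G_y^{[1]} = (kernel1 Gx Gxy) :^ t = kernel1 (Gx :^ t) Gxy. *)
Theorem lemma5p3 (gT : finGroupType) (Gx Ge Gxy : {group gT}) (t : gT) :
  Gxy \subset Gx -> Gxy \subset Ge -> Gx :&: Ge = Gxy ->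
  #|Gx : Gxy| = 5 -> #|Ge : Gxy| = 2 ->
  primitive_amalgam Gx Ge Gxy ->
  t \in Ge :\: Gxy ->
  let Gx1 := kernel1 Gx Gxy in
  let Gy1 := kernel1 (Gx :^ t) Gxy in
  Gx1 :&: Gy1 = 1 ->
  ~~ solvable (Gx / Gx1) ->
  Gx1 != 1 ->
  (Gx1 \isog 'Alt_('I_4) \/ Gx1 \isog 'Sym_('I_4)) /\
  [acts Ge, on Gx1 * Gy1 | 'J] /\ [faithful Ge, on Gx1 * Gy1 | 'J].
Proof.
move=> sx se _ i5 i2 _ tE Gx1 Gy1 AB1 nsol An1.
split; first exact: (Aux.isoA sx se i5 i2 tE AB1 nsol An1).
split; first exact: (Aux.actsAB sx se i2 tE).
exact: (Aux.faithAB sx se i5 i2 tE AB1 nsol An1).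
Qed.
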